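(* For any simplicial map $a:X'\to X$, the functor $a^*:\mathrm{Comod}_{X_+}\to\mathrm{Comod}_{X'_+}$ (right adjoint to the pushforward $a_*$) preserves pushouts.
   Context: For a simplicial set $X$, $X_+$ is $X$ with a disjoint basepoint, and $\mathrm{Comod}_{X_+}$ is the category of right $X_+$-comodules: pointed simplicial sets $Y$ with pointed coassociative, counital maps $\rho:Y\to Y\wedge X_+$ (coassociativity with respect to the diagonal of $X$, counitality with respect to $X_+\to S^0$), and coaction-preserving pointed maps. For $a:X'\to X$, the pushforward is $a_*(Y,\rho)=(Y,(Y\wedge a_+)\rho)$; its right adjoint $a^*$ sends $(Y,\rho)$ to the pullback $a^*Y$ of $Y\xrightarrow{\rho}Y\wedge X_+\xleftarrow{Y\wedge a_+}Y\wedge X'_+$, regarded as a sub-simplicial set of $Y\wedge X'_+$, with $X'_+$-coaction restricted from the cofree coaction on $Y\wedge X'_+$. *)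

(* Defs.v *)
From Stdlib Require Import ClassicalEpsilon ProofIrrelevance.
From mathcomp Require Import all_boot.
Set Implicit Arguments. Unset Strict Implicit. Unset Printing Implicit Defensive.

(** * The simplex category: morphisms [m] -> [n] are monotone maps
    {0..m} -> {0..n}. *)
Definition monotone_ord (m n : nat) (f : 'I_m.+1 -> 'I_n.+1) : Prop :=
  forall i j : 'I_m.+1, i <= j -> f i <= f j.
Definition Dmap (m n : nat) : Type := {f : 'I_m.+1 -> 'I_n.+1 | monotone_ord f}.

Definition did (n : nat) : Dmap n n :=
  exist (@monotone_ord n n) (fun i => i) (fun i j h => h).
Definition dcomp (m n p : nat) (g : Dmap n p) (f : Dmap m n) : Dmap m p :=
  exist (@monotone_ord m p) (fun i => proj1_sig g (proj1_sig f i))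
    (fun i j h => proj2_sig g _ _ (proj2_sig f _ _ h)).

(** * Simplicial sets (contravariant functors Delta^op -> Type) *)
Record sset := SSet {
  sobj :> nat -> Type;
  sact : forall m n, Dmap m n -> sobj n -> sobj m;
  sact_id : forall n x, sact (did n) x = x;
  sact_comp : forall m n p (g : Dmap n p) (f : Dmap m n) x,
      sact (dcomp g f) x = sact f (sact g x) }.
Arguments sact {s m n} _ _.

Record smap (X Y : sset) := SMap {
  smfun :> forall n, X n -> Y n;
  smnat : forall m n (f : Dmap m n) (x : X n), smfun (sact f x) = sact f (smfun x) }.
Arguments smfun {X Y} s n _.
Arguments smnat {X Y} s {m n} f x.

Record psset := PSSet {
  pss :> sset;
  ptt : forall n, pss n;
  sact_pt : forall m n (f : Dmap m n), sact f (ptt n) = ptt m }.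

Record pmap (Y Z : psset) := PMap {
  pm :> smap Y Z;
  pm_pt : forall n, pm n (ptt Y n) = ptt Z n }.

Lemma sig_eqP (A : Type) (P : A -> Prop) (u v : {a : A | P a}) :
  proj1_sig u = proj1_sig v -> u = v.
Proof.
case: u => a pa; case: v => b pb /= e; subst b; f_equal; exact: proof_irrelevance.
Qed.

Definition sid (X : sset) : smap X X := @SMap X X (fun n x => x) (fun m n f x => erefl).
Definition pid (Y : psset) : pmap Y Y := @PMap Y Y (sid Y) (fun n => erefl).

Definition sprod (X : sset) : sset.
Proof.
refine (@SSet (fun n => (X n * X n)%type)
   (fun m n f p => (sact f p.1, sact f p.2)) _ _).
- by move=> n [x1 x2] /=; rewrite !sact_id.
- by move=> m n p g f [x1 x2] /=; rewrite !sact_comp.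
Defined.

Definition sdiag (X : sset) : smap X (sprod X) :=
  @SMap X (sprod X) (fun n x => (x, x)) (fun m n f x => erefl).

(** * The smash product Y /\ X_+ .
    An n-simplex is either the basepoint ([None]) or a pair (y, x) with
    y a non-basepoint n-simplex of Y and x an n-simplex of X;
    (y, x) with y = * is identified with the basepoint. *)
Section Smash.
Variables (Y : psset) (X : sset).

Definition smo n := option {p : (Y n * X n)%type | p.1 <> ptt Y n}.

(** the class [y /\ x] of (y, x) in Y /\ X_+ *)
Definition smk n (y : Y n) (x : X n) : smo n :=
  match excluded_middle_informative (y = ptt Y n) with
  | left _ => None
  | right h => Some (exist (fun p : (Y n * X n)%type => p.1 <> ptt Y n) (y, x) h)
  end.

Lemma smk_pt n (x : X n) : smk (ptt Y n) x = None.
Proof. by rewrite /smk; case: excluded_middle_informative. Qed.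

Lemma smk_Some n (s : {p : (Y n * X n)%type | p.1 <> ptt Y n}) :
  Some s = smk (proj1_sig s).1 (proj1_sig s).2.
Proof.
case: s => -[y x] h /=; rewrite /smk.
case: excluded_middle_informative => h'; first by case: h.
by congr Some; apply: sig_eqP.
Qed.

Lemma smk_np n (y : Y n) (x : X n) (h : (y, x).1 <> ptt Y n) :
  smk y x = Some (exist (fun p : (Y n * X n)%type => p.1 <> ptt Y n) (y, x) h).
Proof.
rewrite /smk; case: excluded_middle_informative => [e|h']; first by case: h.
by congr Some; apply: sig_eqP.
Qed.

Lemma match_smk (T : Type) n (y : Y n) (x : X n) (d : T) (F : (Y n * X n)%type -> T) :
  match smk y x with None => d | Some s => F (proj1_sig s) end =
  match excluded_middle_informative (y = ptt Y n) with
  | left _ => d | right _ => F (y, x) end.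
Proof. by rewrite /smk; case: excluded_middle_informative. Qed.

Definition smact m n (f : Dmap m n) (z : smo n) : smo m :=
  match z with
  | None => None
  | Some s => smk (sact f (proj1_sig s).1) (sact f (proj1_sig s).2)
  end.

Lemma smact_smk m n (f : Dmap m n) (y : Y n) (x : X n) :
  smact f (smk y x) = smk (sact f y) (sact f x).
Proof.
rewrite /smact {1}/smk; case: excluded_middle_informative => [->|h] //=.
by rewrite sact_pt smk_pt.
Qed.

Definition smash_sset : sset.
Proof.
refine (@SSet smo smact _ _).
- move=> n [s|] //; rewrite smk_Some /smact /=.
  by rewrite -smk_Some !sact_id -smk_Some.
- move=> m n p g f [s|] //; rewrite /smact -/(smact g (Some s)).
  by rewrite !sact_comp -smact_smk.
Defined.

Definition smash : psset.
Proof. by refine (@PSSet smash_sset (fun n => None) _). Defined.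

Lemma sact_smk m n (f : Dmap m n) (y : Y n) (x : X n) :
  @sact smash m n f (smk y x) = smk (sact f y) (sact f x).
Proof. exact: smact_smk. Qed.

(** counit  Y /\ X_+ -> Y /\ S^0 = Y, induced by X_+ -> S^0 *)
Definition scu n (z : smo n) : Y n :=
  match z with None => ptt Y n | Some s => (proj1_sig s).1 end.

Lemma scu_smk n (y : Y n) (x : X n) : scu (smk y x) = y.
Proof. by rewrite /scu /smk; case: excluded_middle_informative. Qed.

End Smash.

Section SmashMap.
Variables (Y Z : psset) (X X' : sset) (phi : pmap Y Z) (g : smap X X').

Definition smmapf n (z : smo Y X n) : smo Z X' n :=
  match z with
  | None => None
  | Some s => smk (phi n (proj1_sig s).1) (g n (proj1_sig s).2)
  end.

Lemma smmap_smk n (y : Y n) (x : X n) :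
  smmapf (smk y x) = smk (phi n y) (g n x).
Proof.
rewrite /smmapf {1}/smk; case: excluded_middle_informative => [->|h] //=.
by rewrite pm_pt smk_pt.
Qed.

Definition smmap_s : smap (smash Y X) (smash Z X').
Proof.
refine (@SMap (smash Y X) (smash Z X') smmapf _).
move=> m n f [s|] //; rewrite [Some s]smk_Some.
rewrite (sact_smk (Y:=Y) (X:=X) f) !smmap_smk (sact_smk (Y:=Z) (X:=X') f).
by rewrite !smnat.
Defined.

Definition smmap : pmap (smash Y X) (smash Z X').
Proof. by refine (@PMap _ _ smmap_s _). Defined.

End SmashMap.

(** canonical isomorphism  (Y /\ X_+) /\ X_+  ~  Y /\ (X x X)_+ *)
Definition sassoc (Y : psset) (X : sset) n (z : smo (smash Y X) X n)
  : smo Y (sprod X) n :=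
  match z with
  | None => None
  | Some s =>
      match (proj1_sig s).1 with
      | None => None
      | Some s' => @smk Y (sprod X) n (proj1_sig s').1
                                     ((proj1_sig s').2, (proj1_sig s).2)
      end
  end.

(** * Right comodules over X_+ *)
Record comod (X : sset) := Comod {
  cY :> psset;
  coact : pmap cY (smash cY X);
  coassoc : forall n (y : cY n),
      sassoc (smmap coact (sid X) n (coact n y)) =
      smmap (pid cY) (sdiag X) n (coact n y);
  counit : forall n (y : cY n), scu (coact n y) = y }.

Record cmor (X : sset) (A B : comod X) := CMor {
  cm :> pmap A B;
  cm_co : forall n (y : A n),
      coact B n (cm n y) = smmap cm (sid X) n (coact A n y) }.

(** pushout squares in Comod_{X_+}:
<<
      A --f1--> B
      |         |
     f2         g1
      v         v
      C --g2--> D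
>>  *)
Definition is_pushout (X : sset) (A B C D : comod X)
  (f1 : cmor A B) (f2 : cmor A C) (g1 : cmor B D) (g2 : cmor C D) : Prop :=
  (forall n (x : A n), g1 n (f1 n x) = g2 n (f2 n x)) /\
  forall (W : comod X) (h1 : cmor B W) (h2 : cmor C W),
    (forall n (x : A n), h1 n (f1 n x) = h2 n (f2 n x)) ->
    exists u : cmor D W,
      (forall n x, u n (g1 n x) = h1 n x) /\
      (forall n x, u n (g2 n x) = h2 n x) /\
      (forall v : cmor D W,
          (forall n x, v n (g1 n x) = h1 n x) ->
          (forall n x, v n (g2 n x) = h2 n x) ->
          forall n x, v n x = u n x).

Lemma sm_case (Y : psset) (X : sset) n (z : smo Y X n) :
  z = None \/ exists (y : Y n) (x : X n), z = smk y x.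
Proof. case: z => [s|]; last by left. by right; do 2 eexists; exact: smk_Some. Qed.

Lemma sassoc_smk (Y : psset) (X : sset) n (y : Y n) (x1 x2 : X n) :
  sassoc (@smk (smash Y X) X n (smk y x1) x2) = @smk Y (sprod X) n y (x1, x2).
Proof.
case: (excluded_middle_informative (y = ptt Y n)) => [->|h].
  by rewrite smk_pt (smk_pt (smash Y X)) smk_pt.
rewrite (smk_np h).
have h2 : (Some (exist (fun p : (Y n * X n)%type => p.1 <> ptt Y n) (y, x1) h), x2).1
          <> ptt (smash Y X) n by [].
by rewrite (@smk_np (smash Y X) X n _ x2 h2).
Qed.

(** * The pullback functor a^* : Comod_{X_+} -> Comod_{X'_+} *)
Section Pullback.
Variables (X X' : sset) (a : smap X' X).

Section Obj.
Variable (Y : comod X).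

(** a^*Y : the pullback of  Y --rho--> Y /\ X_+ <--Y /\ a_+-- Y /\ X'_+ *)
Definition pbo n :=
  {p : (Y n * smo Y X' n)%type | coact Y n p.1 = smmap (pid Y) a n p.2}.

Lemma pbact_proof m n (f : Dmap m n) (w : pbo n) :
  coact Y m (sact f (proj1_sig w).1) =
  smmap (pid Y) a m (@sact (smash Y X') m n f (proj1_sig w).2).
Proof. by rewrite smnat (proj2_sig w) -smnat. Qed.

Definition pbact m n (f : Dmap m n) (w : pbo n) : pbo m :=
  exist _ (sact f (proj1_sig w).1, @sact (smash Y X') m n f (proj1_sig w).2)
    (pbact_proof f w).

Definition pb_sset : sset.
Proof.
refine (@SSet pbo pbact _ _).
- move=> n w; apply: sig_eqP; rewrite /pbact; cbn [proj1_sig].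
  by rewrite !sact_id; case: (proj1_sig w).
- move=> m n p g f w; apply: sig_eqP; rewrite /pbact; cbn [proj1_sig].
  by rewrite !sact_comp.
Defined.

Lemma pbpt_proof n : coact Y n (ptt Y n) = smmap (pid Y) a n None.
Proof. by rewrite pm_pt. Qed.

Definition pb_ps : psset.
Proof.
refine (@PSSet pb_sset (fun n => exist _ (ptt Y n, None) (pbpt_proof n)) _).
by move=> m n f; apply: sig_eqP; rewrite /= sact_pt.
Defined.

Lemma pb_none n (w : pbo n) : (proj1_sig w).2 = None -> w = ptt pb_ps n.
Proof.
move=> e; apply: sig_eqP => /=; case: w e => -[y z] /= h e; subst z.
by rewrite -(counit y) h.
Qed.

(** the coaction restricted from the cofree coaction on Y /\ X'_+ *)
Definition pbcof n (w : pbo n) : smo pb_ps X' n :=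
  match (proj1_sig w).2 with
  | None => None
  | Some s => @smk pb_ps X' n w (proj1_sig s).2
  end.

Lemma pbcof_none n (w : pbo n) : (proj1_sig w).2 = None -> pbcof w = None.
Proof. by rewrite /pbcof => ->. Qed.

Lemma pbcof_smk n (w : pbo n) y x :
  (proj1_sig w).2 = smk y x -> pbcof w = @smk pb_ps X' n w x.
Proof.
rewrite /pbcof => e; rewrite e.
case: (excluded_middle_informative (y = ptt Y n)) => [ey|ny].
  have ew : w = ptt pb_ps n by apply: pb_none; rewrite e ey smk_pt.
  by rewrite ey smk_pt ew (smk_pt pb_ps).
by rewrite /smk; case: excluded_middle_informative.
Qed.

Definition pbco_s : smap pb_ps (smash pb_ps X').
Proof.
refine (@SMap pb_ps (smash pb_ps X') pbcof _).
move=> m n f w.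
case: (sm_case (proj1_sig w).2) => [e|[y [x e]]].
  rewrite (pbcof_none e) pbcof_none //= e //.
rewrite (pbcof_smk e) (sact_smk (Y := pb_ps)).
by apply: pbcof_smk; rewrite /= e smact_smk.
Defined.

Definition pbco : pmap pb_ps (smash pb_ps X').
Proof. by refine (@PMap _ _ pbco_s _). Defined.

Definition pb : comod X'.
Proof.
refine (@Comod X' pb_ps pbco _ _).
- move=> n w.
  case: (sm_case (proj1_sig w).2) => [e|[y [x e]]].
    by rewrite /= (pbcof_none e).
  rewrite /= (pbcof_smk e) (smmap_smk (Y := pb_ps)) /=.
  rewrite (pbcof_smk e) sassoc_smk.
  by rewrite (smmap_smk (Y := pb_ps)).
- move=> n w.
  case: (sm_case (proj1_sig w).2) => [e|[y [x e]]].
    by rewrite /= (pbcof_none e) (pb_none e).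
  by rewrite /= (pbcof_smk e) scu_smk.
Defined.

End Obj.

Lemma smmap_swap (Y Z : psset) (phi : pmap Y Z) n (z : smo Y X' n) :
  smmap phi (sid X) n (smmap (pid Y) a n z) = smmap (pid Z) a n (smmap phi (sid X') n z).
Proof.
case: (sm_case z) => [->|[y [x ->]]] //.
by rewrite /= !smmap_smk.
Qed.

Section Mor.
Variables (Y Z : comod X) (phi : cmor Y Z).

Lemma pbm_proof n (w : pbo Y n) :
  coact Z n (phi n (proj1_sig w).1) =
  smmap (pid Z) a n (smmap phi (sid X') n (proj1_sig w).2).
Proof. by rewrite cm_co (proj2_sig w) smmap_swap. Qed.

Definition pbmf n (w : pbo Y n) : pbo Z n :=
  exist _ (phi n (proj1_sig w).1, smmap phi (sid X') n (proj1_sig w).2) (pbm_proof w).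

Definition pbm_s : smap (pb_ps Y) (pb_ps Z).
Proof.
refine (@SMap (pb_ps Y) (pb_ps Z) pbmf _).
move=> m n f w; apply: sig_eqP; rewrite /=; congr pair; [exact: smnat | exact: (smnat (smmap phi (sid X')) f)].
Defined.

Definition pbm_p : pmap (pb_ps Y) (pb_ps Z).
Proof.
refine (@PMap _ _ pbm_s _).
by move=> n; apply: sig_eqP; rewrite /= pm_pt.
Defined.

Definition pbmor : cmor (pb Y) (pb Z).
Proof.
refine (@CMor X' (pb Y) (pb Z) pbm_p _).
move=> n w.
case: (sm_case (proj1_sig w).2) => [e|[y [x e]]].
  by rewrite /= (pbcof_none e) pbcof_none //= e.
rewrite /= (pbcof_smk e) (smmap_smk (Y := pb_ps Y)).
by apply: pbcof_smk; rewrite /= e smmap_smk.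
Defined.

End Mor.
End Pullback.

(* Main.v *)
Require Import Defs.
From mathcomp Require Import all_boot.
From Stdlib Require Import ClassicalEpsilon ProofIrrelevance FunctionalExtensionality PropExtensionality.
Import Defs.
Set Implicit Arguments. Unset Strict Implicit. Unset Printing Implicit Defensive.

Lemma smk_inj (Y : psset) (X : sset) n (y : Y n) (x1 x2 : X n) :
  y <> ptt Y n -> smk y x1 = smk y x2 -> x1 = x2.
Proof.
move=> ny; have h : (y, x1).1 <> ptt Y n by [].
have h2 : (y, x2).1 <> ptt Y n by [].
rewrite (smk_np h) (smk_np h2).
by move/(congr1 (fun o => if o is Some s then (proj1_sig s).2 else x1)).
Qed.

Lemma coact_pt (X : sset) (Y : comod X) n : coact Y n (ptt Y n) = None.
Proof. by rewrite pm_pt. Qed.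

Lemma coact_np (X : sset) (Y : comod X) n (y : Y n) :
  y <> ptt Y n -> exists x, coact Y n y = smk y x.
Proof.
move=> ny; case: (sm_case (coact Y n y)) => [e|[y' [x e]]].
  by have := counit y; rewrite e /= => /esym.
by have := counit y; rewrite e scu_smk => ->; exists x.
Qed.

Lemma coact_cases (X : sset) (Y : comod X) n (y : Y n) :
  (y = ptt Y n /\ coact Y n y = None) \/ (y <> ptt Y n /\ exists x, coact Y n y = smk y x).
Proof.
case: (excluded_middle_informative (y = ptt Y n)) => [->|ny].
  by left; rewrite coact_pt.
by right; split => //; apply: coact_np.
Qed.

Lemma smmap_id (Y : psset) (X : sset) n (z : smo Y X n) :
  smmap (pid Y) (sid X) n z = z.
Proof. by case: (sm_case z) => [->|[y [x ->]]] //=; rewrite smmap_smk. Qed.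

Lemma smmap_comp (Y Z W : psset) (X : sset) (p : pmap Y Z) (q : pmap Z W) (r : pmap Y W) n
  (z : smo Y X n) : (forall y, q n (p n y) = r n y) ->
  smmap q (sid X) n (smmap p (sid X) n z) = smmap r (sid X) n z.
Proof.
move=> e; case: (sm_case z) => [->|[y [x ->]]] //=.
rewrite smmap_smk /= smmap_smk /= smmap_smk e /=.
by [].
Qed.

Definition scomp (Y Z W : sset) (p : smap Y Z) (q : smap Z W) : smap Y W.
Proof.
refine (@SMap Y W (fun n y => q n (p n y)) _).
by move=> m n f x; rewrite !smnat.
Defined.

Definition pcomp (Y Z W : psset) (p : pmap Y Z) (q : pmap Z W) : pmap Y W.
Proof.
refine (@PMap Y W (scomp p q) _).
by move=> n /=; rewrite !pm_pt.
Defined.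

Definition cid (X : sset) (Y : comod X) : cmor Y Y.
Proof. refine (@CMor X Y Y (pid Y) _). by move=> n y; rewrite smmap_id. Defined.

Definition ccomp (X : sset) (Y Z W : comod X) (p : cmor Y Z) (q : cmor Z W) : cmor Y W.
Proof.
refine (@CMor X Y W (pcomp p q) _).
move=> n y /=; rewrite !cm_co; exact: smmap_comp.
Defined.

Section Quot.
Variables (X : sset) (A B C D : comod X).
Variables (f1 : cmor A B) (f2 : cmor A C) (g1 : cmor B D) (g2 : cmor C D).
Hypothesis comm : forall n x, g1 n (f1 n x) = g2 n (f2 n x).

Inductive E n : (B n + C n)%type -> (B n + C n)%type -> Prop :=
| Egen (x : A n) : E (inl (f1 n x)) (inr (f2 n x))
| Erefl p : E p p
| Esym p q : E p q -> E q p
| Etrans p q r : E p q -> E q r -> E p r.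

Definition gg n (p : (B n + C n)%type) : D n :=
  match p with inl b => g1 n b | inr c => g2 n c end.
Definition act m n (f : Dmap m n) (p : (B n + C n)%type) : (B m + C m)%type :=
  match p with inl b => inl (sact f b) | inr c => inr (sact f c) end.
Definition base n : (B n + C n)%type := inl (ptt B n).
Definition isb n (p : (B n + C n)%type) : Prop :=
  match p with inl b => b = ptt B n | inr c => c = ptt C n end.
Definition lab n (p : (B n + C n)%type) (x : X n) : Prop :=
  match p with inl b => coact B n b = smk b x | inr c => coact C n c = smk c x end.

Lemma E_baser n : E (inr (ptt C n)) (base n).
Proof. apply: Esym; have := Egen (ptt A n); by rewrite !pm_pt. Qed.

Lemma isb_E n p : @isb n p -> E p (base n).
Proof. by case: p => [b|c] /= ->; [apply: Erefl | apply: E_baser]. Qed.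

Lemma E_act m n (f : Dmap m n) p q : E p q -> E (act f p) (act f q).
Proof.
elim=> {p q} [x|p|p q _ IH|p q r _ IH1 _ IH2] /=.
- rewrite -!smnat; exact: Egen.
- exact: Erefl.
- exact: Esym.
- exact: Etrans IH1 IH2.
Qed.

Lemma act_base m n (f : Dmap m n) : act f (base n) = base m.
Proof. by rewrite /= sact_pt. Qed.

Lemma E_gg n p q : @E n p q -> gg p = gg q.
Proof. by elim=> {p q} [x|p|p q _ IH|p q r _ IH1 _ IH2] //=; congruence. Qed.

Lemma gg_act m n (f : Dmap m n) p : gg (act f p) = sact f (gg p).
Proof. by case: p => [b|c] /=; rewrite smnat. Qed.

Lemma lab_ex n p : ~ @isb n p -> exists x, lab p x.
Proof. by case: p => [b|c] /= h; apply: coact_np. Qed.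

Lemma lab_uniq n p x y : ~ @isb n p -> lab p x -> lab p y -> x = y.
Proof. by case: p => [b|c] /= h -> e; apply: smk_inj e. Qed.

Lemma lab_act m n (f : Dmap m n) p x : @lab n p x -> lab (act f p) (sact f x).
Proof. by case: p => [b|c] /= e; rewrite smnat e (sact_smk (Y := _)). Qed.

Lemma notE_isb n p : ~ E p (base n) -> ~ isb p.
Proof. by move=> h /isb_E. Qed.

Lemma E_lab n p q : @E n p q -> ~ E p (base n) -> forall x, lab p x <-> lab q x.
Proof.
elim=> {p q} [x|p|p q pq IH|p q r pq IH1 qr IH2] hn y.
- have nb1 : f1 n x <> ptt B n by move=> e; apply: hn; rewrite e; apply: Erefl.
  have nb2 : f2 n x <> ptt C n.
    move=> e; apply: hn; apply: (Etrans (Egen x)); rewrite e; exact: E_baser.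
  have nx : x <> ptt A n by move=> e; apply: nb1; rewrite e pm_pt.
  case: (coact_np nx) => xl ex.
  rewrite /= !cm_co ex /= !smmap_smk /=.
  split=> /(smk_inj _) e; rewrite (e _) //.
- by [].
- have hq : ~ E p (base n) by move=> h; apply: hn; exact: (Etrans (Esym pq) h).
  by move: (IH hq y); tauto.
- have hq : ~ E q (base n) by move=> h; apply: hn; exact: (Etrans pq h).
  by move: (IH1 hn y) (IH2 hq y); tauto.
Qed.

Definition To n := {S : (B n + C n)%type -> Prop | exists p, S = @E n p}.
Definition cls n (p : (B n + C n)%type) : To n := exist _ (@E n p) (ex_intro _ p erefl).
Definition rep n (S : To n) : (B n + C n)%type :=
  proj1_sig (constructive_indefinite_description _ (proj2_sig S)).
Lemma rep_spec n (S : To n) : proj1_sig S = E (rep S).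
Proof. exact: (proj2_sig (constructive_indefinite_description _ (proj2_sig S))). Qed.

Lemma E_sym n p q : @E n p q <-> E q p.
Proof. by split; apply: Esym. Qed.

Lemma cls_eq n p q : @E n p q -> cls p = cls q.
Proof.
move=> h; apply: sig_eqP => /=; apply: functional_extensionality => r.
apply: propositional_extensionality; split=> h'.
  exact: (Etrans (Esym h) h').
exact: (Etrans h h').
Qed.

Lemma cls_inj n p q : @cls n p = cls q -> E p q.
Proof.
move/(congr1 (@proj1_sig _ _)) => /= e.
by rewrite e; apply: Erefl.
Qed.

Lemma cls_rep n (S : To n) : cls (rep S) = S.
Proof. by apply: sig_eqP; rewrite /= -rep_spec. Qed.

Lemma To_ind n (S : To n) : exists p, S = cls p.
Proof. by exists (rep S); rewrite cls_rep. Qed.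

Lemma rep_cls n p : E (rep (@cls n p)) p.
Proof. by apply: cls_inj; rewrite cls_rep. Qed.

Definition Tact m n (f : Dmap m n) (S : To n) : To m := cls (act f (rep S)).

Lemma Tact_cls m n (f : Dmap m n) p : Tact f (cls p) = cls (act f p).
Proof. by apply: cls_eq; apply: E_act; apply: rep_cls. Qed.

Lemma act_id n p : act (did n) p = p.
Proof. by case: p => [b|c] /=; rewrite sact_id. Qed.
Lemma act_comp m n k (g : Dmap n k) (f : Dmap m n) p :
  act (dcomp g f) p = act f (act g p).
Proof. by case: p => [b|c] /=; rewrite sact_comp. Qed.

Definition T_sset : sset.
Proof.
refine (@SSet To Tact _ _).
- move=> n S; case: (To_ind S) => p ->; by rewrite Tact_cls act_id.
- move=> m n k g f S; case: (To_ind S) => p ->; by rewrite !Tact_cls act_comp.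
Defined.

Definition T_ps : psset.
Proof.
refine (@PSSet T_sset (fun n => cls (base n)) _).
by move=> m n f; rewrite /= Tact_cls act_base.
Defined.

Lemma cls_base n p : E p (base n) -> cls p = ptt T_ps n.
Proof. exact: cls_eq. Qed.

Definition Tco n (S : To n) : smo T_ps X n :=
  match excluded_middle_informative (exists x, lab (rep S) x) with
  | left h => @smk T_ps X n S (proj1_sig (constructive_indefinite_description _ h))
  | right _ => None
  end.

Lemma Tco_base n p : E p (base n) -> Tco (cls p) = None.
Proof.
move=> h; rewrite /Tco; case: excluded_middle_informative => // ?.
case: (constructive_indefinite_description _ _) => x0 _ /=.
by rewrite (cls_base h) smk_pt.
Qed.

Lemma Tco_np n p x : ~ E p (base n) -> lab p x -> Tco (cls p) = @smk T_ps X n (cls p) x.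
Proof.
move=> hn hl; rewrite /Tco.
have er := rep_cls p.
have hr : ~ E (rep (cls p)) (base n) by move=> h; apply: hn; exact: (Etrans (Esym er) h).
have hl' : lab (rep (cls p)) x by apply/(E_lab er hr).
case: excluded_middle_informative => [h|[]]; last by exists x.
case: (constructive_indefinite_description _ h) => x0 hx0 /=.
by rewrite (lab_uniq (notE_isb hr) hx0 hl').
Qed.

Lemma Tco_cases n p : (E p (base n) /\ Tco (cls p) = None) \/
   (~ E p (base n) /\ exists x, lab p x /\ Tco (cls p) = @smk T_ps X n (cls p) x).
Proof.
case: (classic (E p (base n))) => h; first by left; split => //; apply: Tco_base.
right; split => //; case: (lab_ex (notE_isb h)) => x hx; exists x; split => //.
exact: Tco_np.
Qed.

Definition Tco_s : smap T_ps (smash T_ps X).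
Proof.
refine (@SMap T_ps (smash T_ps X) Tco _).
move=> m n f S; case: (To_ind S) => p ->; rewrite /= Tact_cls.
case: (Tco_cases p) => [[h ->]|[h [x [hx ->]]]].
  by rewrite Tco_base //; move/(E_act f): h; rewrite act_base.
rewrite smact_smk /= Tact_cls.
case: (classic (E (act f p) (base m))) => h'.
  rewrite Tco_base //; have -> : cls (act f p) = ptt T_ps m by apply: cls_base.
  by rewrite smk_pt.
by rewrite (Tco_np h' (lab_act f hx)).
Defined.

Definition Tco_p : pmap T_ps (smash T_ps X).
Proof. refine (@PMap _ _ Tco_s _) => n /=; apply: Tco_base; exact: Erefl. Defined.

Definition T : comod X.
Proof.
refine (@Comod X T_ps Tco_p _ _).
- move=> n S; case: (To_ind S) => p ->.
  case: (Tco_cases p) => [[h e]|[h [x [hx e]]]]; rewrite /= e //.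
  by rewrite /= smmap_smk /= e sassoc_smk smmap_smk.
- move=> n S; case: (To_ind S) => p ->.
  case: (Tco_cases p) => [[h e]|[h [x [hx e]]]]; rewrite /= e ?scu_smk //.
  by rewrite (cls_base h).
Defined.

Definition k1_s : smap B T_ps.
Proof.
refine (@SMap B T_ps (fun n b => cls (inl b)) _).
by move=> m n f b /=; rewrite Tact_cls.
Defined.
Definition k1_p : pmap B T_ps.
Proof. by refine (@PMap _ _ k1_s _). Defined.
Definition k1 : cmor B T.
Proof.
refine (@CMor X B T k1_p _).
move=> n b; case: (coact_cases b) => [[-> ->]|[nb [x ex]]].
  by rewrite /= Tco_base //; apply: Erefl.
rewrite ex /= smmap_smk /=.
case: (classic (E (inl b) (base n))) => h.
  by rewrite Tco_base // (cls_base h) smk_pt.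
exact: (Tco_np h ex).
Defined.

Definition k2_s : smap C T_ps.
Proof.
refine (@SMap C T_ps (fun n c => cls (inr c)) _).
by move=> m n f c /=; rewrite Tact_cls.
Defined.
Definition k2_p : pmap C T_ps.
Proof. refine (@PMap _ _ k2_s _) => n /=; apply: cls_eq; exact: E_baser. Defined.
Definition k2 : cmor C T.
Proof.
refine (@CMor X C T k2_p _).
move=> n c; case: (coact_cases c) => [[-> ->]|[nc [x ex]]].
  by rewrite /= Tco_base //; apply: E_baser.
rewrite ex /= smmap_smk /=.
case: (classic (E (inr c) (base n))) => h.
  by rewrite Tco_base // (cls_base h) smk_pt.
exact: (Tco_np h ex).
Defined.

Lemma k12 n x : k1 n (f1 n x) = k2 n (f2 n x).
Proof. by apply: cls_eq; apply: Egen. Qed.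

Definition s_s : smap T_ps D.
Proof.
refine (@SMap T_ps D (fun n S => gg (rep S)) _).
move=> m n f S /=; rewrite -gg_act; apply: E_gg; apply: rep_cls.
Defined.

Lemma s_cls n p : s_s n (cls p) = gg p.
Proof. by apply: E_gg; apply: rep_cls. Qed.

Definition s_p : pmap T_ps D.
Proof. refine (@PMap _ _ s_s _) => n; exact: (etrans (s_cls (base n)) (pm_pt g1 n)). Defined.

Lemma gg_base n p : E p (base n) -> gg p = ptt D n.
Proof. by move/E_gg => ->; rewrite /= pm_pt. Qed.

Definition s : cmor T D.
Proof.
refine (@CMor X T D s_p _).
move=> n S; case: (To_ind S) => p ->.
have eg : gg (rep (cls p)) = gg p by apply: E_gg; apply: rep_cls.
case: (Tco_cases p) => [[h e]|[h [x [hx e]]]]; rewrite /= e /= eg.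
  by rewrite (gg_base h) coact_pt.
rewrite smmap_smk /= eg.
by case: p {h e eg} hx => [b|c] /= hx; rewrite cm_co hx /= smmap_smk.
Defined.

End Quot.

Section Main.
Variables (X X' : sset) (a : smap X' X) (A B C D : comod X).
Variables (f1 : cmor A B) (f2 : cmor A C) (g1 : cmor B D) (g2 : cmor C D).
Hypothesis comm : forall n x, g1 n (f1 n x) = g2 n (f2 n x).
Hypothesis UP : forall (W : comod X) (h1 : cmor B W) (h2 : cmor C W),
    (forall n (x : A n), h1 n (f1 n x) = h2 n (f2 n x)) ->
    exists u : cmor D W,
      (forall n x, u n (g1 n x) = h1 n x) /\
      (forall n x, u n (g2 n x) = h2 n x) /\
      (forall v : cmor D W,
          (forall n x, v n (g1 n x) = h1 n x) ->
          (forall n x, v n (g2 n x) = h2 n x) ->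
          forall n x, v n x = u n x).

Lemma kern n (p q : (B n + C n)%type) : gg g1 g2 p = gg g1 g2 q -> E f1 f2 p q.
Proof.
move=> e.
have [u' [u1 [u2 _]]] := UP (@k12 _ _ _ _ f1 f2).
have ep : forall r : (B n + C n)%type, u' n (gg g1 g2 r) = cls f1 f2 r.
  by case=> [b|c] /=; [rewrite u1 | rewrite u2].
apply: cls_inj; by rewrite -!ep e.
Qed.

Lemma surj n (d : D n) : exists p, gg g1 g2 p = d.
Proof.
have [u' [u1 [u2 _]]] := UP (@k12 _ _ _ _ f1 f2).
have [u0 [_ [_ uq]]] := UP comm.
have e1 := uq (cid D) (fun _ _ => erefl) (fun _ _ => erefl) n d.
have e2 := uq (ccomp u' (s comm)) _ _ n d.
exists (rep (u' n d)).
rewrite /= in e1 e2; rewrite {2}e1 -e2 //.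
- by move=> m b /=; rewrite u1; exact: (s_cls comm (inl b)).
- by move=> m c /=; rewrite u2; exact: (s_cls comm (inr c)).
Qed.

Definition cond (Y : comod X) n (y : Y n) (x' : X' n) : Prop :=
  coact Y n y = smmap (pid Y) a n (smk y x').

Lemma cond_iff (Y : comod X) n (y : Y n) x' :
  cond y x' <-> coact Y n y = smk y (a n x').
Proof. by rewrite /cond /= smmap_smk. Qed.

Lemma cond_pt (Y : comod X) n x' : cond (ptt Y n) x'.
Proof. by rewrite /cond coact_pt smk_pt. Qed.

Lemma cond_map (Y Z : comod X) (phi : cmor Y Z) n (y : Y n) x' :
  cond y x' -> cond (phi n y) x'.
Proof. by move/cond_iff => e; apply/cond_iff; rewrite cm_co e /= smmap_smk. Qed.

Lemma cond_unmap (Y Z : comod X) (phi : cmor Y Z) n (y : Y n) x' :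
  phi n y <> ptt Z n -> cond (phi n y) x' -> cond y x'.
Proof.
move=> ny /cond_iff e; apply/cond_iff.
have nyy : y <> ptt Y n by move=> h; apply: ny; rewrite h pm_pt.
case: (coact_np nyy) => xl ex.
rewrite cm_co ex /= smmap_smk in e.
by rewrite ex -(smk_inj ny e).
Qed.

Variables (W : comod X') (h1 : cmor (pb a B) W) (h2 : cmor (pb a C) W).
Hypothesis hA : forall n x, h1 n (pbmor a f1 n x) = h2 n (pbmor a f2 n x).

Definition el (Y : comod X) n (y : Y n) x' (e : cond y x') : pb a Y n :=
  exist _ (y, smk y x') e.

Lemma el_pt (Y : comod X) n x' (e : cond (ptt Y n) x') : el e = ptt (pb a Y) n.
Proof. by apply: sig_eqP; rewrite /= smk_pt. Qed.

Lemma el_map (Y Z : comod X) (phi : cmor Y Z) n (y : Y n) x' (e : cond y x') e' :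
  pbmor a phi n (el e) = el (y := phi n y) (x' := x') e'.
Proof. by apply: sig_eqP; rewrite /= smmap_smk. Qed.

Definition H n (p : (B n + C n)%type) (x' : X' n) : W n :=
  match p with
  | inl b => match excluded_middle_informative (cond b x') with
             | left e => h1 n (el e) | right _ => ptt W n end
  | inr c => match excluded_middle_informative (cond c x') with
             | left e => h2 n (el e) | right _ => ptt W n end
  end.

Arguments H : simpl never.

Lemma H_inl n (b : B n) x' (e : cond b x') : H (inl b) x' = h1 n (el e).
Proof.
rewrite /H; case: excluded_middle_informative => // e'.
by rewrite (proof_irrelevance _ e e').
Qed.
Lemma H_inr n (c : C n) x' (e : cond c x') : H (inr c) x' = h2 n (el e).
Proof.
rewrite /H; case: excluded_middle_informative => // e'.
by rewrite (proof_irrelevance _ e e').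
Qed.

Lemma H_inl0 n (b : B n) x' : (b = ptt B n \/ ~ cond b x') -> H (inl b) x' = ptt W n.
Proof.
move=> h; rewrite /H; case: excluded_middle_informative => // e.
case: h => [eb|//]; move: e; rewrite eb => e.
by rewrite el_pt pm_pt.
Qed.
Lemma H_inr0 n (c : C n) x' : (c = ptt C n \/ ~ cond c x') -> H (inr c) x' = ptt W n.
Proof.
move=> h; rewrite /H; case: excluded_middle_informative => // e.
case: h => [eb|//]; move: e; rewrite eb => e.
by rewrite el_pt pm_pt.
Qed.

Lemma H_E n p q : E f1 f2 p q -> forall x', @H n p x' = H q x'.
Proof.
elim=> {p q} [x|p|p q _ IH|p q r _ IH1 _ IH2] x'.
- case: (classic (cond x x')) => c.
    rewrite (H_inl (cond_map f1 c)) (H_inr (cond_map f2 c)).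
    by rewrite -(el_map (phi:=f1) c) -(el_map (phi:=f2) c) hA.
  rewrite H_inl0 ?H_inr0 //.
    case: (classic (f2 n x = ptt C n)) => h; [by left | right].
    by move/(cond_unmap h).
  case: (classic (f1 n x = ptt B n)) => h; [by left | right].
  by move/(cond_unmap h).
- by [].
- by rewrite IH.
- by rewrite IH1 IH2.
Qed.

Definition repD n (d : D n) : (B n + C n)%type :=
  proj1_sig (constructive_indefinite_description _ (surj d)).
Lemma repD_spec n (d : D n) : gg g1 g2 (repD d) = d.
Proof. exact: (proj2_sig (constructive_indefinite_description _ (surj d))). Qed.

Definition uf n (w : pb a D n) : W n :=
  match (proj1_sig w).2 with
  | None => ptt W n
  | Some sg => H (repD (proj1_sig sg).1) (proj1_sig sg).2
  end.

Lemma uf_pt n : uf (ptt (pb a D) n) = ptt W n.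
Proof. by []. Qed.

Lemma H_gg n p q x' : gg g1 g2 p = gg g1 g2 q -> @H n p x' = H q x'.
Proof. by move/kern/H_E. Qed.

Lemma uf_g1 n (w : pb a B n) : uf (pbmor a g1 n w) = h1 n w.
Proof.
case: w => -[b z] pf.
case: (sm_case z) => [ez|[y [x' ez]]].
  subst z; rewrite /uf /=.
  by rewrite (@pb_none _ _ a B n (exist _ (b, None) pf)) // pm_pt.
case: (excluded_middle_informative (y = ptt B n)) => ny.
  subst z y; rewrite smk_pt in pf *; rewrite /uf /=.
  by rewrite (@pb_none _ _ a B n (exist _ (b, None) pf)) // pm_pt.
subst z.
have eb : b = y.
  by have := counit b; rewrite /= in pf; rewrite pf /= smmap_smk scu_smk.
subst y.
have -> : (exist _ (b, smk b x') pf : pb a B n) = el (pf : cond b x') by [].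
rewrite -(H_inl (pf : cond b x')) /uf /= smmap_smk /=.
case: (excluded_middle_informative (g1 n b = ptt D n)) => hg.
  rewrite hg smk_pt /=; symmetry; rewrite (@H_gg _ _ (inl (ptt B n))) /=.
    by apply: H_inl0; left.
  by rewrite hg pm_pt.
have hh : (g1 n b, x').1 <> ptt D n by [].
rewrite (smk_np hh) /=.
by apply: H_gg; rewrite repD_spec.
Qed.

Lemma uf_g2 n (w : pb a C n) : uf (pbmor a g2 n w) = h2 n w.
Proof.
case: w => -[b z] pf.
case: (sm_case z) => [ez|[y [x' ez]]].
  subst z; rewrite /uf /=.
  by rewrite (@pb_none _ _ a C n (exist _ (b, None) pf)) // pm_pt.
case: (excluded_middle_informative (y = ptt C n)) => ny.
  subst z y; rewrite smk_pt in pf *; rewrite /uf /=.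
  by rewrite (@pb_none _ _ a C n (exist _ (b, None) pf)) // pm_pt.
subst z.
have eb : b = y.
  by have := counit b; rewrite /= in pf; rewrite pf /= smmap_smk scu_smk.
subst y.
have -> : (exist _ (b, smk b x') pf : pb a C n) = el (pf : cond b x') by [].
rewrite -(H_inr (pf : cond b x')) /uf /= smmap_smk /=.
case: (excluded_middle_informative (g2 n b = ptt D n)) => hg.
  rewrite hg smk_pt /=; symmetry; rewrite (@H_gg _ _ (inr (ptt C n))) /=.
    by apply: H_inr0; left.
  by rewrite hg pm_pt.
have hh : (g2 n b, x').1 <> ptt D n by [].
rewrite (smk_np hh) /=.
by apply: H_gg; rewrite repD_spec.
Qed.

Lemma decomp n (w : pb a D n) :
  w = ptt (pb a D) n \/ (exists wB, w = pbmor a g1 n wB) \/ (exists wC, w = pbmor a g2 n wC).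
Proof.
case: w => -[d z] pf.
case: (sm_case z) => [ez|[y [x' ez]]].
  by subst z; left; apply: pb_none.
case: (excluded_middle_informative (y = ptt D n)) => ny.
  by subst z y; left; apply: pb_none; rewrite /= smk_pt.
subst z.
have ed : d = y.
  by have := counit d; rewrite /= in pf; rewrite pf /= smmap_smk scu_smk.
subst y.
have pf' : cond d x' by [].
right; have := repD_spec d; case: (repD d) => [b|c] /= e; subst d.
- left; exists (el (cond_unmap ny pf')); apply: sig_eqP => /=.
  by rewrite smmap_smk.
- right; exists (el (cond_unmap ny pf')); apply: sig_eqP => /=.
  by rewrite smmap_smk.
Qed.

Definition u_s : smap (pb a D) W.
Proof.
refine (@SMap (pb a D) W uf _).
move=> m n f w.
case: (decomp w) => [->|[[wB ->]|[wC ->]]].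
- by rewrite sact_pt uf_pt sact_pt.
- by rewrite -smnat uf_g1 uf_g1 smnat.
- by rewrite -smnat uf_g2 uf_g2 smnat.
Defined.

Definition u_p : pmap (pb a D) W.
Proof. by refine (@PMap _ _ u_s _). Defined.

Definition u : cmor (pb a D) W.
Proof.
refine (@CMor X' (pb a D) W u_p _).
move=> n w.
case: (decomp w) => [->|[[wB ->]|[wC ->]]].
- by rewrite !pm_pt.
- rewrite cm_co /= uf_g1 cm_co; apply: esym; apply: smmap_comp => y; exact: uf_g1.
- rewrite cm_co /= uf_g2 cm_co; apply: esym; apply: smmap_comp => y; exact: uf_g2.
Defined.

End Main.

Theorem corollary3p4 (X X' : sset) (a : smap X' X) (A B C D : comod X)
  (f1 : cmor A B) (f2 : cmor A C) (g1 : cmor B D) (g2 : cmor C D) :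
  is_pushout f1 f2 g1 g2 ->
  is_pushout (pbmor a f1) (pbmor a f2) (pbmor a g1) (pbmor a g2).
Proof.
case=> comm UP; split.
  move=> n [[y z] pf]; apply: sig_eqP => /=; congr pair; first exact: comm.
  by case: (sm_case z) => [->|[y' [x' ->]]] //=; rewrite smmap_smk /= smmap_smk /= smmap_smk /= smmap_smk /= comm.
move=> W h1 h2 hA.
exists (u comm UP hA); split; first by move=> n x; exact: uf_g1.
split; first by move=> n x; exact: uf_g2.
move=> v v1 v2 n w.
case: (decomp comm UP w) => [->|[[wB ->]|[wC ->]]].
- by rewrite !pm_pt.
- by rewrite v1 /=; rewrite uf_g1.
- by rewrite v2 /=; rewrite uf_g2.
Qed.
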